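(* Let $B$ be a finite set with $|B|\ge 2$ and let $f$ be an $\mathsf{A}$-shop on $B$. Then $\langle f\rangle$ contains an $\mathsf{A}$-shop $g$ for which there are an element $b\in B$ and sets $B',B''\subseteq B$ with $B'$ non-empty, such that $\{b\},B',B''$ are pairwise disjoint with union $B$, and (1) $g(b)=B$; (2) $g(x)=\{x\}$ for all $x\in B'$; (3) for every $x\in B''$ there exists $y\in B'$ with $g(x)=\{y\}$.
   Context: A shop on $B$ is a map $f:B\to\mathcal{P}(B)\setminus\{\emptyset\}$ such that every $y\in B$ lies in $f(x)$ for some $x\in B$. An $\mathsf{A}$-shop is a shop $f$ such that $f(b)=B$ for some $b\in B$. The identity shop is $x\mapsto\{x\}$; the composition of shops is $(g\circ f)(x)=\{z:\exists y\ (y\in f(x)\wedge z\in g(y))\}$; a shop $f$ is a sub-shop of $g$ if $f(x)\subseteq g(x)$ for all $x$. A down-she-monoid (DSM) on $B$ is a set of shops on $B$ containing the identity, closed under composition and under taking sub-shops (that are shops). $\langle f\rangle$ denotes the smallest DSM containing $f$. *)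

(* Defs.v *)
From mathcomp Require Import all_boot.
Set Implicit Arguments. Unset Strict Implicit. Unset Printing Implicit Defensive.

Definition shop (B : finType) (f : B -> {set B}) : Prop :=
  (forall x, f x != set0) /\ (forall y, exists x, y \in f x).

Definition Ashop (B : finType) (f : B -> {set B}) : Prop :=
  shop f /\ exists b, f b = [set: B].

Definition id_shop (B : finType) : B -> {set B} := fun x => [set x].

Definition comp_shop (B : finType) (g f : B -> {set B}) : B -> {set B} :=
  fun x => \bigcup_(y in f x) g y.

Definition sub_shop (B : finType) (f g : B -> {set B}) : Prop :=
  forall x, f x \subset g x.

Definition DSM (B : finType) (M : (B -> {set B}) -> Prop) : Prop :=
  [/\ forall h, M h -> shop h,
      M (@id_shop B),
      (forall f g, M f -> M g -> M (comp_shop g f))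
    & (forall f g, M g -> shop f -> sub_shop f g -> M f)].

Definition gen_DSM (B : finType) (f : B -> {set B}) : (B -> {set B}) -> Prop :=
  fun h => forall M, DSM M -> M f -> M h.

(* Main.v *)
Require Import Defs.
From mathcomp Require Import all_boot.
Set Implicit Arguments. Unset Strict Implicit. Unset Printing Implicit Defensive.

Definition sfun (B : finType) (b : B) (phi : B -> B) : B -> {set B} :=
  fun x => if x == b then setT else [set phi x].

Lemma sfun_shop (B : finType) (b : B) phi : shop (sfun b phi).
Proof.
split=> [x|y]; last by exists b; rewrite /sfun eqxx inE.
rewrite /sfun; case: (x =P b) => _; apply/set0Pn.
  by exists x; rewrite inE.
by exists (phi x); rewrite set11.
Qed.

Lemma gen_self (B : finType) (f : B -> {set B}) : gen_DSM f f.
Proof. by move=> M _. Qed.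

Lemma gen_comp (B : finType) (f g h : B -> {set B}) :
  gen_DSM f g -> gen_DSM f h -> gen_DSM f (comp_shop h g).
Proof. by move=> Hg Hh M HM Mf; case: (HM) => _ _ Hc _; apply: Hc; [exact: Hg | exact: Hh]. Qed.

Lemma gen_sub (B : finType) (f g h : B -> {set B}) :
  gen_DSM f g -> shop h -> sub_shop h g -> gen_DSM f h.
Proof. by move=> Hg sh sub M HM Mf; case: (HM) => _ _ _ Hs; apply: Hs sh sub; exact: Hg. Qed.

Lemma sfun_comp (B : finType) (b : B) psi phi :
  sub_shop (sfun b (psi \o phi)) (comp_shop (sfun b psi) (sfun b phi)).
Proof.
move=> x; rewrite /comp_shop /sfun.
case: (x =P b) => [_|_].
  apply/subsetP => z _; apply/bigcupP; exists b; by rewrite ?inE ?eqxx.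
apply/subsetP => z; rewrite inE => /eqP->; apply/bigcupP; exists (phi x).
  by rewrite inE.
by case: eqP => _; rewrite inE.
Qed.

Lemma idem_of (T : Type) (phi : T -> T) i j : i < j ->
  (forall x, iter i phi x = iter j phi x) ->
  exists a, 0 < a /\ forall x, iter a phi (iter a phi x) = iter a phi x.
Proof.
move=> hij he. set p := j - i.
have hp : 0 < p by rewrite /p subn_gt0.
have hm : forall m x, iter (i + m * p) phi x = iter i phi x.
  elim=> [|m IH] x; first by rewrite mul0n addn0.
  have hpi : p + i = j by rewrite /p subnK // ltnW.
  by rewrite mulSn addnCA iterD IH -iterD hpi he.
have hc : forall c m x, i <= c -> iter (c + m * p) phi x = iter c phi x.
  move=> c m x hic.
  by rewrite -(subnK hic) -addnA iterD hm -iterD.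
exists (i.+1 * p); split; first by rewrite muln_gt0.
move=> x; rewrite -iterD hc //.
by apply: leq_trans (leqnSn i) _; rewrite leq_pmulr.
Qed.

Theorem lemma3p5 (B : finType) (f : B -> {set B}) :
  2 <= #|B| -> Ashop f ->
  exists g : B -> {set B},
    gen_DSM f g /\ Ashop g /\
    exists (b : B) (B' B'' : {set B}),
      B' != set0 /\
      b \notin B' /\ b \notin B'' /\ [disjoint B' & B''] /\
      [set b] :|: B' :|: B'' = [set: B] /\
      g b = [set: B] /\
      (forall x, x \in B' -> g x = [set x]) /\
      (forall x, x \in B'' -> exists2 y, y \in B' & g x = [set y]).
Proof.
move=> hB [[hne hcov] [b hb]].
pose phi0 := fun x => if x == b then b else odflt b [pick y in f x].
have r0 : gen_DSM f (sfun b phi0).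
  apply: (gen_sub (@gen_self _ f)); first exact: sfun_shop.
  move=> x; rewrite /sfun; case: (x =P b) => [->|/eqP/negbTE hx].
    by rewrite hb subxx.
  rewrite /phi0 hx; case: pickP => [y hy|h0]; first by rewrite sub1set.
  by move/set0Pn: (hne x) => [y]; rewrite h0.
have rcomp : forall psi phi, gen_DSM f (sfun b psi) -> gen_DSM f (sfun b phi) ->
    gen_DSM f (sfun b (psi \o phi)).
  move=> psi phi hpsi hphi.
  exact: gen_sub (gen_comp hphi hpsi) (sfun_shop _ _) (sfun_comp _ _ _).
have riter : forall n, gen_DSM f (sfun b (iter n.+1 phi0)).
  elim=> [|n IH]; first exact: r0.
  exact: (rcomp _ _ r0 IH).
pose N := #|{ffun B -> B}|.
pose F := fun k : 'I_N.+1 => [ffun x => iter k phi0 x].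
have : ~~ injectiveb F.
  apply/negP => /injectiveP inj; have := @leq_card _ _ F inj.
  by rewrite card_ord ltnn.
case/injectivePn => i [j hij hF].
have hF' : forall x, iter i phi0 x = iter j phi0 x.
  by move=> x; have := congr1 (fun g : {ffun B -> B} => g x) hF; rewrite /F !ffunE.
have [a [ha he]] : exists a, 0 < a /\ forall x, iter a phi0 (iter a phi0 x) = iter a phi0 x.
  case: (ltngtP i j) => h.
  - exact: idem_of h hF'.
  - by apply: idem_of h _ => x; rewrite hF'.
  - by move: hij; rewrite (val_inj h) eqxx.
case: a ha he => // a' _ he.
set e := iter a'.+1 phi0 in he.
have re : gen_DSM f (sfun b e) := riter a'.
pose psi := fun x => if e x == b then x else e x.
have rg : gen_DSM f (sfun b psi).
  apply: (gen_sub (gen_comp re re)); first exact: sfun_shop.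
  move=> x; rewrite /comp_shop /sfun.
  case: (x =P b) => [_|_].
    apply/subsetP => z _; apply/bigcupP; exists b; by rewrite ?inE ?eqxx.
  apply/subsetP => z; rewrite inE => /eqP->; apply/bigcupP; exists (e x).
    by rewrite inE.
  rewrite /psi; case: eqP => [_|/eqP/negbTE hex]; first by rewrite inE.
  by rewrite he inE.
have fix1 : forall x, e x != b -> psi (e x) = e x.
  by move=> x hx; rewrite /psi he (negbTE hx).
exists (sfun b psi); split; first exact: rg.
split; first by split; [exact: sfun_shop | exists b; rewrite /sfun eqxx].
exists b, [set x | (x != b) && (psi x == x)], [set x | (x != b) && (psi x != x)].
split.
  have : 0 < #|[set~ b]| by rewrite cardsC1 -ltnS (ltn_predK hB).
  rewrite card_gt0 => /set0Pn [x]; rewrite !inE => hxb.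
  apply/set0Pn; case hex: (e x == b).
    by exists x; rewrite inE hxb /psi hex eqxx.
  exists (e x); rewrite inE hex /= fix1 ?hex //.
split; first by rewrite inE eqxx.
split; first by rewrite inE eqxx.
split.
  rewrite disjoint_subset; apply/subsetP => x; rewrite !inE => /andP[-> ->].
  by [].
split.
  by apply/setP => x; rewrite !inE; case: (x == b); case: (psi x == x).
split; first by rewrite /sfun eqxx.
split.
  by move=> x; rewrite inE => /andP[hx /eqP h]; rewrite /sfun (negbTE hx) h.
move=> x; rewrite inE => /andP[hx hpx].
have hex : e x != b.
  by apply/negP => hex; move: hpx; rewrite /psi hex eqxx.
exists (e x).
  by rewrite inE hex /= fix1.
by rewrite /sfun (negbTE hx) /psi (negbTE hex).
Qed.
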